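(* Let $\|\cdot\|$ be a norm on $\mathbb{R}^n$ and let $\Phi\subset\mathbb{R}^n$ be a set of functions such that, for some strictly increasing function $c:(0,1]\to(0,1]$: (i) $\Phi$ contains the constant function $\mathbf 1$, $\Phi=-\Phi$, $\|\phi\|_\infty\le1$ for every $\phi\in\Phi$, and the linear span of $\Phi$ is $\mathbb{R}^n$; (ii) $\langle f,\phi\rangle\le1$ for every $f$ with $\|f\|\le1$ and every $\phi\in\Phi$; (iii) if $\|f\|_\infty\le1$ and $\|f\|\ge\epsilon$ then there exists $\phi\in\Phi$ with $\langle f,\phi\rangle\ge c(\epsilon)$. Let $\epsilon>0$ and let $\eta:\mathbb{R}_+\to\mathbb{R}_+$ be strictly decreasing. Then there is a constant $M_0$, depending only on $\epsilon$, $c$ and $\eta$, such that every $f\in\mathbb{R}^n$ taking values in $[0,1]$ can be written as $f=f_1+f_2+f_3$ where: $f_1$ and $f_1+f_3$ take values in $[0,1]$; $f_1=\sum_i\lambda_i\psi_i$ with $\sum_i|\lambda_i|=M\le M_0$ and each $\psi_i$ a (pointwise) product of functions in $\Phi$; $\|f_2\|\le\eta(M)$; and $\|f_3\|_2\le\epsilon$.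
   Context: Functions in $\mathbb{R}^n$ are functions on $\{1,\dots,n\}$, with $\langle f,g\rangle=\frac1n\sum_xf(x)g(x)$, $\|f\|_2=(\frac1n\sum_xf(x)^2)^{1/2}$, $\|f\|_\infty=\max_x|f(x)|$. *)

(* Defs.v *)
From mathcomp Require Import all_boot all_order all_algebra.
From mathcomp Require Import reals.
Set Implicit Arguments. Unset Strict Implicit. Unset Printing Implicit Defensive.
Import Order.TTheory GRing.Theory Num.Theory.
Local Open Scope ring_scope.

Section Defs.
Variables (R : realType) (n : nat).
Notation vec := ('I_n -> R).

Definition ip (f g : vec) : R := n%:R^-1 * \sum_(x < n) f x * g x.

Definition norm2 (f : vec) : R := Num.sqrt (ip f f).

Definition normoo (f : vec) : R := \big[Num.max/0]_(x < n) `|f x|.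

Definition is_norm (N : vec -> R) : Prop :=
  [/\ forall f, N f = 0 -> f = (fun _ => 0),
      forall (a : R) f, N (fun x => a * f x) = `|a| * N f
    & forall f g, N (fun x => f x + g x) <= N f + N g].

Definition spans (Phi : vec -> Prop) : Prop :=
  forall g : vec, exists k (a : 'I_k -> R) (phi : 'I_k -> vec),
    (forall i, Phi (phi i)) /\ forall x, g x = \sum_(i < k) a i * phi i x.

Definition is_prod_of (Phi : vec -> Prop) (psi : vec) : Prop :=
  exists k (phi : 'I_k -> vec),
    (forall i, Phi (phi i)) /\ forall x, psi x = \prod_(i < k) phi i x.

End Defs.

(* Main.v *)
Require Import Defs.
From mathcomp Require Import all_boot all_order all_algebra.
From mathcomp Require Import reals.
Import Order.TTheory GRing.Theory Num.Theory.
Local Open Scope ring_scope.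
From mathcomp Require Import classical_sets.
From mathcomp Require Import ring lra.
Import Order.TTheory GRing.Theory Num.Theory.
Local Open Scope ring_scope.
Set Implicit Arguments. Unset Strict Implicit. Unset Printing Implicit Defensive.


Section Avg.
Variables (R : realType) (n : nat).
Notation vec := ('I_n -> R).

Definition avg (h : vec) : R := n%:R^-1 * \sum_(x < n) h x.

Lemma avgD (a b : vec) : avg (fun x => a x + b x) = avg a + avg b.
Proof. by rewrite /avg big_split mulrDr. Qed.

Lemma avgZ k (a : vec) : avg (fun x => k * a x) = k * avg a.
Proof. by rewrite /avg -mulr_sumr mulrCA. Qed.

Lemma avg_ext (a b : vec) : (forall x, a x = b x) -> avg a = avg b.
Proof. by move=> h; rewrite /avg (eq_bigr _ (fun x _ => h x)). Qed.

Lemma avg_le (a b : vec) : (forall x, a x <= b x) -> avg a <= avg b.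
Proof. by move=> h; rewrite /avg ler_wpM2l ?invr_ge0 ?ler0n// ler_sum. Qed.

Lemma avg_cst k : avg (fun _ => k) = (if n == 0%N then 0 else k).
Proof.
rewrite /avg sumr_const card_ord; case: eqP => [->|/eqP nz]; first by rewrite mulr0n mulr0.
by rewrite -[k *+ n]mulr_natl mulrA mulVf ?mul1r // pnatr_eq0.
Qed.

Lemma avg_cst_le k : 0 <= k -> avg (fun _ => k) <= k.
Proof. by move=> k0; rewrite avg_cst; case: eqP. Qed.

Lemma avg_ge0 (a : vec) : (forall x, 0 <= a x) -> 0 <= avg a.
Proof.
move=> h; have : avg (fun _ => 0) <= avg a by apply: avg_le.
by rewrite avg_cst; case: eqP.
Qed.

Lemma ipE (a b : vec) : ip a b = avg (fun x => a x * b x).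
Proof. by []. Qed.

End Avg.


Lemma bigI (T : Type) (idx : T) (op : Monoid.com_law idx) (I : finType) (F : I -> T) :
  \big[op/idx]_(i : I) F i = \big[op/idx]_(j < #|I|) F (enum_val j).
Proof. rewrite -big_enum_val. by apply: eq_bigl => i; rewrite inE. Qed.

Section Struct.
Variables (R : realType) (n : nat) (Phi : ('I_n -> R) -> Prop).
Notation vec := ('I_n -> R).

Definition prodP (psi : vec) := exists (I : finType) (phi : I -> vec),
  (forall i, Phi (phi i)) /\ forall x, psi x = \prod_i phi i x.

Lemma prodP1 : prodP (fun _ => 1).
Proof.
exists 'I_0, (fun _ _ => 1); split; first by case.
by move=> x; rewrite big_ord0.
Qed.

Lemma prodPM a b : prodP a -> prodP b -> prodP (fun x => a x * b x).
Proof.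
move=> [I1 [p1 [H1 E1]]] [I2 [p2 [H2 E2]]].
exists (I1 + I2)%type, (fun i => match i with inl j => p1 j | inr j => p2 j end).
split; first by case.
by move=> x; rewrite big_sumType E1 E2.
Qed.

Lemma prodP_is (psi : vec) : prodP psi -> is_prod_of Phi psi.
Proof.
move=> [I [p [H E]]]; exists #|I|, (fun j => p (enum_val j)); split => // x.
by rewrite E bigI.
Qed.

Lemma prodP_bnd (psi : vec) : (forall phi, Phi phi -> normoo phi <= 1) ->
  prodP psi -> forall x, `|psi x| <= 1.
Proof.
move=> hb [I [p [H E]]] x; rewrite E normr_prod.
suff : 0 <= \prod_i `|p i x| <= 1 by case/andP.
apply: (big_ind (fun v => 0 <= v <= 1)); first by rewrite ler01 lexx.
  move=> u v /andP[u0 u1] /andP[v0 v1]; rewrite mulr_ge0 //=.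
  by rewrite -[1]mulr1 ler_pM.
move=> i _; rewrite normr_ge0 /=; apply: le_trans (hb _ (H i)).
exact: (le_bigmax 0 (fun y => `|p i y|) x).
Qed.

Definition sP (L : R) (g : vec) := exists (I : finType) (lam : I -> R) (psi : I -> vec),
  [/\ forall i, prodP (psi i), forall x, g x = \sum_i lam i * psi i x
     & \sum_i `|lam i| <= L].

Lemma sP_ge0 L g : sP L g -> 0 <= L.
Proof. by move=> [I [l [p [_ _ h]]]]; apply: le_trans h; apply: sumr_ge0. Qed.

Lemma sP_le L L' g : L <= L' -> sP L g -> sP L' g.
Proof. by move=> le [I [l [p [h1 h2 h3]]]]; exists I, l, p; split => //; apply: le_trans le. Qed.

Lemma sP_ext L g g' : (forall x, g x = g' x) -> sP L g -> sP L g'.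
Proof. by move=> e [I [l [p [h1 h2 h3]]]]; exists I, l, p; split => // x; rewrite -e. Qed.

Lemma sP_cst a : sP `|a| (fun _ => a).
Proof.
exists 'I_1, (fun _ => a), (fun _ _ => 1); split.
- by move=> _; apply: prodP1.
- by move=> x; rewrite big_ord1 mulr1.
- by rewrite big_ord1.
Qed.

Lemma sP_Phi phi : Phi phi -> sP 1 phi.
Proof.
move=> h; exists 'I_1, (fun _ => 1), (fun _ => phi); split.
- move=> _; exists 'I_1, (fun _ => phi); split => // x.
  by rewrite big_ord1.
- by move=> x; rewrite big_ord1 mul1r.
- by rewrite big_ord1 normr1.
Qed.

Lemma sP_add L1 L2 g1 g2 : sP L1 g1 -> sP L2 g2 -> sP (L1 + L2) (fun x => g1 x + g2 x).
Proof.
move=> [I1 [l1 [p1 [a1 b1 c1]]]] [I2 [l2 [p2 [a2 b2 c2]]]].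
exists (I1 + I2)%type, (fun i => match i with inl j => l1 j | inr j => l2 j end),
  (fun i => match i with inl j => p1 j | inr j => p2 j end); split.
- by case.
- by move=> x; rewrite big_sumType b1 b2.
- by rewrite big_sumType lerD.
Qed.

Lemma sP_scale L k g : sP L g -> sP (`|k| * L) (fun x => k * g x).
Proof.
move=> [I [l [p [a b c]]]]; exists I, (fun i => k * l i), p; split => //.
- by move=> x; rewrite b mulr_sumr; apply: eq_bigr => i _; rewrite mulrA.
- under eq_bigr do rewrite normrM.
  by rewrite -mulr_sumr ler_wpM2l.
Qed.

Lemma sP_mul L1 L2 g1 g2 : sP L1 g1 -> sP L2 g2 -> sP (L1 * L2) (fun x => g1 x * g2 x).
Proof.
move=> [I1 [l1 [p1 [a1 b1 c1]]]] [I2 [l2 [p2 [a2 b2 c2]]]].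
exists (I1 * I2)%type, (fun q => l1 q.1 * l2 q.2), (fun q x => p1 q.1 x * p2 q.2 x); split.
- by move=> q; apply: prodPM.
- move=> x; rewrite b1 b2 mulr_suml.
  rewrite -(pair_bigA _ (fun i j => l1 i * l2 j * (p1 i x * p2 j x))); apply: eq_bigr => i _.
  rewrite mulr_sumr; apply: eq_bigr => j _; ring.
- rewrite -(pair_bigA _ (fun i j => `|l1 i * l2 j|)) /=.
  under eq_bigr do (under eq_bigr do rewrite normrM; rewrite -mulr_sumr).
  rewrite -mulr_suml; apply: ler_pM => //; by apply: sumr_ge0.
Qed.

Lemma sP_pow L g k : sP L g -> sP (L ^+ k) (fun x => g x ^+ k).
Proof.
move=> h; elim: k => [|k IH].
  rewrite expr0; have := sP_cst (1:R); rewrite normr1.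
  by apply: sP_ext => x; rewrite expr0.
rewrite exprS; apply: sP_ext (sP_mul h IH) => x; by rewrite exprS.
Qed.

Lemma sP_sum m (L : 'I_m -> R) (G : 'I_m -> vec) : (forall k, sP (L k) (G k)) ->
  sP (\sum_k L k) (fun x => \sum_k G k x).
Proof.
elim: m L G => [|m IH] L G h.
  rewrite big_ord0; apply: (@sP_ext _ (fun _ => 0)); first by move=> x; rewrite big_ord0.
  by rewrite -{1}(normr0 R); apply: sP_cst.
rewrite big_ord_recr /=.
have := sP_add (IH (fun k => L (widen_ord (leqnSn m) k)) (fun k => G (widen_ord (leqnSn m) k)) (fun k => h _)) (h ord_max).
by apply: sP_ext => x; rewrite big_ord_recr.
Qed.

Lemma sP_bnd L g : (forall phi, Phi phi -> normoo phi <= 1) -> sP L g -> forall x, `|g x| <= L.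
Proof.
move=> hb [I [l [p [a b c]]]] x; rewrite b; apply: le_trans (ler_norm_sum _ _ _) _.
apply: le_trans c; apply: ler_sum => i _; rewrite normrM.
by rewrite -[X in _ <= X]mulr1 ler_wpM2l // (prodP_bnd hb).
Qed.

Lemma sP_to L g : sP L g -> exists k (lam : 'I_k -> R) (psi : 'I_k -> vec),
  [/\ forall i, is_prod_of Phi (psi i), forall x, g x = \sum_(i < k) lam i * psi i x
     & \sum_(i < k) `|lam i| <= L].
Proof.
move=> [I [l [p [a b c]]]]; exists #|I|, (fun j => l (enum_val j)), (fun j => p (enum_val j)).
split.
- by move=> i; apply: prodP_is.
- by move=> x; rewrite b bigI.
- by rewrite -(bigI _ (fun i => `|l i|)).
Qed.

End Struct.


Section Bern.
Variable R : realType.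

Definition pB (m : nat) (y : R) (k : nat) := ('C(m, k))%:R * y ^+ k * (1 - y) ^+ (m - k).

Lemma pB_ge0 m y k : 0 <= y <= 1 -> 0 <= pB m y k.
Proof.
case/andP=> y0 y1; rewrite /pB !mulr_ge0 ?exprn_ge0 ?ler0n //; lra.
Qed.

Lemma sumB0 m y : \sum_(k < m.+1) pB m y k = 1.
Proof.
have := exprDn (1 - y) y m; rewrite subrK expr1n => ->.
by apply: eq_bigr => i _; rewrite /pB -mulr_natl; ring.
Qed.

Lemma shiftB (u : nat -> R) m y :
  \sum_(k < m.+2) u k * k%:R * pB m.+1 y k = m.+1%:R * y * \sum_(i < m.+1) u i.+1 * pB m y i.
Proof.
rewrite big_ord_recl /= mulr0 mul0r add0r mulr_sumr; apply: eq_bigr => i _.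

rewrite /bump add1n /pB /= subSS exprS.
have e : (i.+1%:R * ('C(m.+1, i.+1))%:R = m.+1%:R * ('C(m, i))%:R :> R).
  by rewrite -!natrM -mul_bin_diag.
transitivity (u i.+1 * (i.+1%:R * ('C(m.+1, i.+1))%:R) * y * y ^+ i * (1 - y) ^+ (m - i)).
  ring.
rewrite e; ring.
Qed.

Lemma sumB1 m y : \sum_(k < m.+1) k%:R * pB m y k = m%:R * y.
Proof.
case: m => [|m]; first by rewrite big_ord1 mul0r mul0r.
transitivity (\sum_(k < m.+2) (fun _ => 1) k * k%:R * pB m.+1 y k).
  by apply: eq_bigr => i _; rewrite mul1r.
rewrite (shiftB (fun _ => 1)) (eq_bigr (fun i : 'I_m.+1 => pB m y i)) ?sumB0 ?mulr1 // => i _.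
by rewrite mul1r.
Qed.

Lemma sumB2 m y : \sum_(k < m.+1) k%:R ^+ 2 * pB m y k = m%:R * y * ((m%:R - 1) * y + 1).
Proof.
case: m => [|m]; first by rewrite big_ord1 expr2 !mul0r.
have := shiftB (fun k => k%:R) m y.
have -> : \sum_(i < m.+1) i.+1%:R * pB m y i = m%:R * y + 1.
  transitivity (\sum_(i < m.+1) (i%:R * pB m y i + pB m y i)).
    by apply: eq_bigr => i _; rewrite -natr1 mulrDl mul1r.
  by rewrite big_split /= sumB1 sumB0.
move=> e; have -> : (m.+1%:R - 1 : R) = m%:R by rewrite -natr1 addrK.
rewrite -e.
by apply: eq_bigr => i _; rewrite expr2.
Qed.

Lemma varB m y : (0 < m)%N ->
  \sum_(k < m.+1) (k%:R / m%:R - y) ^+ 2 * pB m y k = y * (1 - y) / m%:R.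
Proof.
move=> m0; have mn0 : m%:R != 0 :> R by rewrite pnatr_eq0 -lt0n.
pose a := (m%:R : R)^-2.
transitivity (\sum_(k < m.+1) (a * (k%:R ^+ 2 * pB m y k) + (- (2 * y / m%:R)) * (k%:R * pB m y k) + y ^+ 2 * pB m y k)).
  apply: eq_bigr => i _; rewrite /a; field; exact: mn0.
rewrite !big_split /= -!mulr_sumr sumB2 sumB1 sumB0 /a; field; exact: mn0.
Qed.

Lemma absle_aux (d s : R) : 0 < s -> `|d| <= s + d ^+ 2 / s.
Proof.
move=> s0; rewrite -(ler_pM2r s0) mulrDl mulfVK ?gt_eqF //.
have : `|d| ^+ 2 = d ^+ 2 by rewrite real_normK ?num_real.
have := normr_ge0 d; nra.
Qed.

Definition bern (h : R -> R) (m : nat) (y : R) := \sum_(k < m.+1) h (k%:R / m%:R) * pB m y k.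

Lemma bern_approx (h : R -> R) (K s : R) m y : (0 < m)%N -> 0 <= K -> 0 < s -> 0 <= y <= 1 ->
  (forall a b, 0 <= a <= 1 -> 0 <= b <= 1 -> `|h a - h b| <= K * `|a - b|) ->
  `|bern h m y - h y| <= K * (s + 1 / (s * m%:R)).
Proof.
move=> m0 K0 s0 y01 hL.
have mpos : 0 < m%:R :> R by rewrite ltr0n.
have -> : bern h m y - h y = \sum_(k < m.+1) (h (k%:R / m%:R) - h y) * pB m y k.
  transitivity (bern h m y - h y * \sum_(k < m.+1) pB m y k); first by rewrite sumB0 mulr1.
  rewrite /bern mulr_sumr -sumrB.
  by apply: eq_bigr => i _; rewrite mulrBl.
apply: le_trans (ler_norm_sum _ _ _) _.
apply: (@le_trans _ _ (\sum_(k < m.+1) (K * s * pB m y k + K / s * ((k%:R / m%:R - y) ^+ 2 * pB m y k)))).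
  apply: ler_sum => i _; rewrite normrM (ger0_norm (pB_ge0 _ _ y01)).
  have km : (0 : R) <= (i%:R / m%:R : R) <= 1.
    apply/andP; split; first by rewrite divr_ge0 ?ler0n ?ltW.
    by rewrite ler_pdivrMr // mul1r ler_nat -ltnS.
  have := hL _ _ km y01; have := absle_aux (i%:R / m%:R - y) s0.
  have := pB_ge0 m i y01.
  move=> p0 h1 h2.
  have h3 : `|h (i%:R / m%:R) - h y| <= K * (s + (i%:R / m%:R - y) ^+ 2 / s).
    by apply: le_trans h2 _; rewrite ler_wpM2l.
  apply: le_trans (ler_wpM2r p0 h3) _; rewrite le_eqVlt; apply/orP; left; apply/eqP.
  by field; rewrite !gt_eqF.
rewrite big_split /= -!mulr_sumr sumB0 varB // mulr1.
have yy : y * (1 - y) <= 1 by case/andP: y01 => ? ?; nra.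
rewrite [X in _ <= X]mulrDr lerD2l.
have -> : K / s * (y * (1 - y) / m%:R) = K * (y * (1 - y)) * (1 / (s * m%:R)).
  by field; rewrite !gt_eqF.
apply: ler_wpM2r; first by rewrite divr_ge0 ?ler01 ?mulr_ge0 ?ltW.
by rewrite -[X in _ <= X]mulr1 ler_wpM2l.
Qed.

Lemma bern01 (h : R -> R) m y : 0 <= y <= 1 -> (forall a, 0 <= h a <= 1) -> 0 <= bern h m y <= 1.
Proof.
move=> y01 hb; apply/andP; split.
  by apply: sumr_ge0 => i _; have := hb (i%:R / m%:R); case/andP=> ? ?; rewrite mulr_ge0 // pB_ge0.
rewrite -(sumB0 m y); apply: ler_sum => i _.
by have := hb (i%:R / m%:R); case/andP=> ? ?; rewrite ler_piMl // pB_ge0.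
Qed.

End Bern.


Section Trunc.
Variable R : realType.
Definition T (u : R) : R := if u < 0 then 0 else if 1 < u then 1 else u.

Lemma T01 u : 0 <= T u <= 1.
Proof. rewrite /T; case: ltrP => h1; first by rewrite lexx ler01. case: ltrP => h2; apply/andP; split; lra. Qed.

Lemma T_lip a b : `|T a - T b| <= `|a - b|.
Proof.
have h1 := ler_norm (a - b); have h2 := ler_norm (- (a - b)); rewrite normrN in h2.
rewrite ler_norml /T; case: (ltrP a 0) => ha; case: (ltrP 1 a) => ha'; case: (ltrP b 0) => hb;
  case: (ltrP 1 b) => hb'; apply/andP; split; lra.
Qed.

Lemma T_proj (f u : R) : 0 <= f <= 1 -> (f - T u) ^+ 2 <= (f - u) ^+ 2.
Proof.
case/andP=> f0 f1; rewrite /T; case: (ltrP u 0) => hu; first nra.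
case: (ltrP 1 u) => hu'; nra.
Qed.

Definition hT (y : R) := T (3 * y - 1).

Lemma hT_lip a b : `|hT a - hT b| <= 3 * `|a - b|.
Proof.
apply: le_trans (T_lip _ _) _.
have -> : 3 * a - 1 - (3 * b - 1) = 3 * (a - b) by ring.
by rewrite normrM ger0_norm.
Qed.
End Trunc.

Section Energy.
Variables (R : realType) (n : nat) (Phi : ('I_n -> R) -> Prop) (f : 'I_n -> R).
Hypothesis hb : forall phi, Phi phi -> normoo phi <= 1.
Hypothesis hf : forall x, 0 <= f x <= 1.
Notation vec := ('I_n -> R).

Definition K (L : R) (g : vec) := sP Phi L g /\ forall x, 0 <= g x <= 1.
Definition en (g : vec) := avg (fun x => (f x - g x) ^+ 2).
Definition E (L : R) : set R := (fun v => exists g, K L g /\ v = en g).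
Definition e (L : R) := inf (E L).

Lemma en_ge0 g : 0 <= en g.
Proof. by apply: avg_ge0 => x; apply: sqr_ge0. Qed.

Lemma K0 L : 0 <= L -> K L (fun _ => 0).
Proof.
move=> L0; split; last by move=> x; rewrite lexx ler01.
by apply: sP_le (sP_cst Phi 0); rewrite normr0.
Qed.

Lemma en0 : en (fun _ => 0) <= 1.
Proof.
rewrite /en; apply: (@le_trans _ _ (avg (fun _ : 'I_n => 1))); last by apply: avg_cst_le; rewrite ler01.
apply: avg_le => x.
have := hf x; case/andP => ? ?; rewrite subr0; nra.
Qed.

Lemma E_ne L : 0 <= L -> nonempty (E L).
Proof. by move=> L0; exists (en (fun _ => 0)), (fun _ => 0); split => //; apply: K0. Qed.

Lemma E_lb L : has_lbound (E L).
Proof. by exists 0 => v [g [_ ->]]; apply: en_ge0. Qed.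

Lemma e_lb L g : K L g -> e L <= en g.
Proof. by move=> Kg; apply: (ge_inf (E_lb L)); exists g. Qed.

Lemma e_adh L d : 0 <= L -> 0 < d -> exists g, K L g /\ en g < e L + d.
Proof.
move=> L0 d0; have [v [g [Kg ->]] lt] := inf_adherent d0 (conj (E_ne L0) (E_lb L)).
by exists g.
Qed.

Lemma e_ge0 L : 0 <= L -> 0 <= e L.
Proof. by move=> L0; apply: lb_le_inf (E_ne L0) _ => v [g [_ ->]]; apply: en_ge0. Qed.

Lemma e_le1 L : 0 <= L -> e L <= 1.
Proof. by move=> L0; apply: le_trans (e_lb (K0 L0)) en0. Qed.

Lemma e_mono L L' : 0 <= L -> L <= L' -> e L' <= e L.
Proof.
move=> L0 LL; apply: lb_le_inf (E_ne L0) _ => v [g [[sg g01] ->]].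
by apply: e_lb; split => //; apply: sP_le sg.
Qed.

Lemma avg3 (a b c : R) (u v w : vec) :
  avg (fun x => a * u x + b * v x + c * w x) = a * avg u + b * avg v + c * avg w.
Proof. by rewrite !avgD !avgZ. Qed.

Lemma obtuse A B g g' d : A <= B -> K A g -> K B g' -> en g' < e B + d ->
  avg (fun x => (g' x - g x) ^+ 2) <= 2 * (en g - en g') + 4 * d.
Proof.
move=> AB [sg g01] [sg' g01'] hd.
pose w := fun x => 1 / 2 * g x + 1 / 2 * g' x.
have Kw : K B w.
  split; last by move=> x; move: (g01 x) (g01' x); rewrite /w => /andP[? ?] /andP[? ?]; apply/andP; split; lra.
  have := sP_add (sP_scale (1/2) (sP_le AB sg)) (sP_scale (1/2) sg').
  have -> : `|1 / 2 : R| * B + `|1 / 2 : R| * B = B.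
    by rewrite ger0_norm ?divr_ge0 ?ler01 ?ler0n //; field.
  exact.
have hw := e_lb Kw.
have -> : avg (fun x => (g' x - g x) ^+ 2) = 2 * en g' + 2 * en g + (- 4) * en w.
  have ex : forall x, ((g' x - g x) ^+ 2 : R) = 2 * (f x - g' x) ^+ 2 + 2 * (f x - g x) ^+ 2 + (- 4) * (f x - w x) ^+ 2.
    by move=> x; rewrite /w; field.
  by rewrite /en -avg3; apply: avg_ext.
lra.
Qed.

Lemma phi_bnd phi x : Phi phi -> -1 <= phi x <= 1.
Proof.
move=> /hb h; have : `|phi x| <= 1.
  by apply: le_trans h; exact: (le_bigmax 0 (fun y => `|phi y|) x).
by rewrite ler_norml.
Qed.

Lemma perturb B g phi t m tau : 0 <= B -> K B g -> Phi phi -> 0 < t <= 1 -> (0 < m)%N ->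
  0 <= tau <= 1 ->
  (forall y, 0 <= y <= 1 -> `|bern (@hT R) m y - hT y| <= tau) ->
  K ((2 * B + 4) ^+ m) (fun x => bern (@hT R) m ((g x + t * phi x + 1) / 3)) /\ en (fun x => bern (@hT R) m ((g x + t * phi x + 1) / 3))
    <= en g - 2 * t * ip (fun x => f x - g x) phi + (t ^+ 2 + 3 * tau).
Proof.
move=> B0 [sg g01] Pphi /andP[t0 t1] m0 /andP[tau0 tau1] happ.
pose y := fun x => (g x + t * phi x + 1) / 3.
have y01 : forall x, 0 <= y x <= 1.
  move=> x; have := g01 x; have := phi_bnd x Pphi; rewrite /y => /andP[? ?] /andP[? ?].
  apply/andP; split; nra.
have hTy : forall x, hT (y x) = T (g x + t * phi x) by move=> x; rewrite /hT /y; congr T; field.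
split.
  split; last by move=> x; apply: bern01 (y01 x) (fun a => T01 _).
  have sY : sP Phi (B + 2) y.
    have := sP_add (sP_add (sP_scale (1/3) sg) (sP_scale (t/3) (sP_Phi Pphi))) (sP_cst Phi (1/3)).
    move/(sP_le (L' := B + 2)) => h; apply: sP_ext (h _) => [x|]; first by rewrite /y; field.
    rewrite !ger0_norm ?divr_ge0 ?ler01 ?ler0n ?ltW //; lra.
  have s1Y : sP Phi (B + 2) (fun x => 1 - y x).
    have := sP_add (sP_add (sP_scale (- (1/3)) sg) (sP_scale (- (t/3)) (sP_Phi Pphi))) (sP_cst Phi (2/3)).
    move/(sP_le (L' := B + 2)) => h; apply: sP_ext (h _) => [x|]; first by rewrite /y; field.
    rewrite !normrN !ger0_norm ?divr_ge0 ?ler01 ?ler0n ?ltW //; lra.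
  have sk : forall k : 'I_m.+1, sP Phi (('C(m, k))%:R * ((B + 2) ^+ k * (B + 2) ^+ (m - k)))
      (fun x => hT (k%:R / m%:R) * pB m (y x) k).
    move=> k; have := sP_scale (hT (k%:R / m%:R) * ('C(m, k))%:R) (sP_mul (sP_pow k sY) (sP_pow (m - k) s1Y)).
    move/(sP_le (L' := ('C(m, k))%:R * ((B + 2) ^+ k * (B + 2) ^+ (m - k)))) => h.
    apply: sP_ext (h _) => [x|]; first by rewrite /pB; ring.
    apply: ler_wpM2r; first by rewrite mulr_ge0 ?exprn_ge0 //; lra.
    have h01 : (0:R) <= hT (k%:R / m%:R : R) <= 1 := T01 _; case/andP: h01 => h0 h1.
    rewrite normrM (ger0_norm (ler0n _ _)) ger0_norm //.
    by rewrite -[X in _ <= X]mul1r ler_wpM2r.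
  have := sP_sum sk; apply: sP_le.
  have -> : 2 * B + 4 = (B + 2) + (B + 2) by ring.
  rewrite exprDn le_eqVlt; apply/orP; left; apply/eqP; apply: eq_bigr => i _.
  by rewrite mulr_natl mulrC.
apply: (@le_trans _ _ (avg (fun x => (f x - g x) ^+ 2 + (- (2 * t)) * ((f x - g x) * phi x) + (t ^+ 2 + 3 * tau)))); last first.
  rewrite !avgD avgZ !avg_cst /en ipE /=.
  have := sqr_ge0 t; case: eqP => _; lra.
apply: avg_le => x /=.
have := happ _ (y01 x); rewrite hTy => hd.
have := T_proj (g x + t * phi x) (hf x).
have := T01 (g x + t * phi x); have := hf x; have := phi_bnd x Pphi.
move: hd; set b := bern _ _ _; set Tu := T _.
rewrite ler_norml => /andP[d1 d2] /andP[p1 p2] /andP[f0 f1] /andP[u0 u1] hp.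
have q1 : 0 <= (tau - (b - Tu)) * (1 + (f x - Tu)) by apply: mulr_ge0; lra.
have q2 : 0 <= (tau + (b - Tu)) * (1 - (f x - Tu)) by apply: mulr_ge0; lra.
have q3 : 0 <= (tau - (b - Tu)) * (tau + (b - Tu)) by apply: mulr_ge0; lra.
have q4 : 0 <= tau * (1 - tau) by apply: mulr_ge0; lra.
have e1 : (f x - b) ^+ 2 <= (f x - Tu) ^+ 2 + 3 * tau by nra.
have q6 : 0 <= t ^+ 2 * ((1 - phi x) * (1 + phi x)) by rewrite mulr_ge0 ?sqr_ge0 // mulr_ge0 //; lra.
have e2 : (f x - (g x + t * phi x)) ^+ 2 <= (f x - g x) ^+ 2 - 2 * t * ((f x - g x) * phi x) + t ^+ 2 by nra.
lra.
Qed.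

End Energy.


Lemma pigeon (R : realType) (x : nat -> R) (g : R) (N : nat) :
  0 < g -> 1 < N%:R * g -> (forall i, (i <= N)%N -> 0 <= x i <= 1) ->
  exists i, (i < N)%N /\ x i - x i.+1 <= g.
Proof.
move=> g0 Ng hx.
case: (boolP [exists i : 'I_N, x i - x i.+1 <= g]) => [/existsP [i hi]|].
  by exists i; split.
rewrite negb_exists => /forallP hall.
have key : forall j, (j <= N)%N -> j%:R * g <= x 0%N - x j.
  elim=> [|j IH] hj; first by rewrite mul0r subrr.
  have hj' : (j < N)%N by [].
  have := hall (Ordinal hj'); rewrite /= -ltNge => hlt.
  have := IH (ltnW hj'); rewrite -natr1 mulrDl mul1r; lra.
have := key N (leqnn N); have := hx 0%N (leq0n N); have := hx N (leqnn N).
move=> /andP[? ?] /andP[? ?]; lra.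
Qed.

Lemma bern_tau (R : realType) (tau : R) m y : 0 < tau -> 36 / tau ^+ 2 <= m%:R ->
  0 <= y <= 1 -> `|bern (@hT R) m y - hT y| <= tau.
Proof.
move=> t0 hm y01.
have m0 : (0 < m)%N.
  case: m hm => // hm; have : 0 < 36 / tau ^+ 2 by rewrite divr_gt0 ?exprn_gt0.
  lra.
have mpos : 0 < m%:R :> R by rewrite ltr0n.
apply: le_trans (bern_approx (K := 3) (s := tau / 6) m0 _ _ y01 (fun a b _ _ => hT_lip a b)) _.
- by [].
- by rewrite divr_gt0.
have h1 : 36 <= tau ^+ 2 * m%:R by move: hm; rewrite ler_pdivrMr ?exprn_gt0 // mulrC.
have -> : 3 * (tau / 6 + 1 / (tau / 6 * m%:R)) = tau / 2 + 18 / (tau * m%:R).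
  by field; rewrite !gt_eqF.
suff : 18 / (tau * m%:R) <= tau / 2 by lra.
rewrite ler_pdivrMr ?mulr_gt0 //.
have -> : tau / 2 * (tau * m%:R) = tau ^+ 2 * m%:R / 2 by field.
lra.
Qed.

Section Stable.
Variables (R : realType) (n : nat) (Phi : ('I_n -> R) -> Prop) (f : 'I_n -> R).
Variables (N : ('I_n -> R) -> R) (c : R -> R).
Hypothesis hb : forall phi, Phi phi -> normoo phi <= 1.
Hypothesis hf : forall x, 0 <= f x <= 1.
Hypothesis hiii : forall (e : R) f, 0 < e <= 1 -> normoo f <= 1 -> e <= N f ->
        exists2 phi, Phi phi & c e <= ip f phi.

Lemma normoo_le1 (v : 'I_n -> R) : (forall x, `|v x| <= 1) -> normoo v <= 1.
Proof. by move=> h; apply: bigmax_le => //; rewrite ler01. Qed.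

Lemma stable ea m B g' d : 0 < ea <= 1 -> 0 < c ea <= 1 -> 36 / (c ea ^+ 2 / 6) ^+ 2 <= m%:R ->
  0 <= B -> K Phi B g' -> en f g' < e Phi f B + d -> d <= c ea ^+ 2 / 4 ->
  e Phi f B - e Phi f ((2 * B + 4) ^+ m) <= c ea ^+ 2 / 4 ->
  N (fun x => f x - g' x) < ea.
Proof.
move=> ea01 /andP[c0 c1] hm B0 Kg' hd dle gap.
rewrite ltNge; apply/negP => hN.
have [phi Pphi hip] : exists2 phi, Phi phi & c ea <= ip (fun x => f x - g' x) phi.
  apply: hiii => //; apply: normoo_le1 => x.
  case: Kg' => _ /(_ x) /andP[? ?]; have := hf x; case/andP => ? ?.
  rewrite ler_norml; apply/andP; split; lra.
have tau0 : 0 < c ea ^+ 2 / 6 by rewrite divr_gt0 ?exprn_gt0.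
have m0 : (0 < m)%N.
  rewrite lt0n; apply/negP => /eqP m0; move: hm; rewrite m0.
  have : 0 < 36 / (c ea ^+ 2 / 6) ^+ 2 by rewrite divr_gt0 ?exprn_gt0.
  lra.
have tau01 : 0 <= c ea ^+ 2 / 6 <= 1 by apply/andP; split; [exact: ltW| nra].
have t01 : 0 < c ea <= 1 by rewrite c0 c1.
have [Kh hen] := @perturb R n Phi f hb hf B g' phi (c ea) m (c ea ^+ 2 / 6)
  B0 Kg' Pphi t01 m0 tau01 (fun y hy => bern_tau tau0 hm hy).
have := e_lb f Kh.
have hp : c ea * c ea <= c ea * ip (fun x => f x - g' x) phi by rewrite ler_wpM2l // ltW.
move=> he; rewrite expr2 in dle gap hen tau01 he; nra.
Qed.

End Stable.


Section Levels.
Variables (R : realType) (c eta : R -> R).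

Definition eA (A : R) : R := Num.min (eta A) 1.
Definition cA (A : R) : R := c (eA A).
Definition mA (A : R) : nat := (Num.trunc (36 / (cA A ^+ 2 / 6) ^+ 2)).+1.
Definition FA (A B : R) : R := (2 * B + 4) ^+ mA A.
Definition IA (A : R) : nat := (Num.trunc (4 / cA A ^+ 2)).+1.
Definition chain (A : R) (i : nat) : R := iter i (FA A) A.
Definition outer (k : nat) : R := iter k (fun A => chain A (IA A)) 0.

Lemma mA_ge A : 36 / (cA A ^+ 2 / 6) ^+ 2 <= (mA A)%:R.
Proof. exact/ltW/truncnS_gt. Qed.

Lemma mA_gt0 A : (0 < mA A)%N. Proof. by []. Qed.

Lemma FA_ge A B : 0 <= B -> B <= FA A B.
Proof.
move=> B0; apply: (@le_trans _ _ (2 * B + 4)); first lra.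
by apply: ler_eXnr => //; lra.
Qed.

Lemma chain_ge0 A i : 0 <= A -> 0 <= chain A i.
Proof.
move=> A0; elim: i => [|i IH] //=.
by apply: le_trans (FA_ge _ IH).
Qed.

Lemma chain_mono A i j : 0 <= A -> (i <= j)%N -> chain A i <= chain A j.
Proof.
move=> A0 /subnK <-; elim: (j - i)%N => [|k IH]; first by rewrite add0n.
by apply: le_trans IH _; rewrite addSn /=; apply: FA_ge; exact: (@chain_ge0 A (k + i) A0).
Qed.

Lemma outer_ge0 k : 0 <= outer k.
Proof. elim: k => [|k IH] //. have := chain_ge0 (IA (outer k)) IH. by []. Qed.

Lemma outer_mono i j : (i <= j)%N -> outer i <= outer j.
Proof.
move=> /subnK <-; elim: (j - i)%N => [|k IH]; first by rewrite add0n.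
apply: le_trans IH _; rewrite addSn.
by have := @chain_mono (outer (k + i)) 0 (IA (outer (k + i))) (outer_ge0 _) (leq0n _).
Qed.

End Levels.

Theorem theorem5p8 (R : realType) (eps : R) (c eta : R -> R) :
  0 < eps ->
  (forall t, 0 < t <= 1 -> 0 < c t <= 1) ->
  (forall s t, 0 < s -> s < t -> t <= 1 -> c s < c t) ->
  (forall t, 0 <= t -> 0 <= eta t) ->
  (forall s t, 0 <= s -> s < t -> eta t < eta s) ->
  exists M0 : R,
  forall (n : nat) (N : ('I_n -> R) -> R) (Phi : ('I_n -> R) -> Prop),
    is_norm N ->
    Phi (fun _ => 1) ->
    (forall phi, Phi phi -> Phi (fun x => - phi x)) ->
    (forall phi, Phi phi -> normoo phi <= 1) ->
    spans Phi ->
    (forall f phi, N f <= 1 -> Phi phi -> ip f phi <= 1) ->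
    (forall (e : R) f, 0 < e <= 1 -> normoo f <= 1 -> e <= N f ->
        exists2 phi, Phi phi & c e <= ip f phi) ->
    forall f : 'I_n -> R, (forall x, 0 <= f x <= 1) ->
    exists (f1 f2 f3 : 'I_n -> R) (k : nat) (lambda : 'I_k -> R)
           (psi : 'I_k -> 'I_n -> R),
      (forall x, f x = f1 x + f2 x + f3 x) /\
      (forall x, 0 <= f1 x <= 1) /\
      (forall x, 0 <= f1 x + f3 x <= 1) /\
      (forall i, is_prod_of Phi (psi i)) /\
      (forall x, f1 x = \sum_(i < k) lambda i * psi i x) /\
      \sum_(i < k) `|lambda i| <= M0 /\
      N f2 <= eta (\sum_(i < k) `|lambda i|) /\
      norm2 f3 <= eps.
Proof.
move=> eps0 hc01 hcinc heta0 hetadec.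
have etapos : forall t, 0 <= t -> 0 < eta t.
  move=> t t0; have := hetadec t (t + 1) t0 (ltr_pwDr ltr01 (lexx t)).
  have := heta0 (t + 1) (addr_ge0 t0 ler01); lra.
have etamono : forall s t, 0 <= s -> s <= t -> eta t <= eta s.
  move=> s t s0; rewrite le_eqVlt => /orP[/eqP -> //| st]; exact/ltW/hetadec.
have eA01 : forall A, 0 <= A -> 0 < eA eta A <= 1.
  move=> A A0; rewrite /eA; apply/andP; split; last by rewrite ge_min lexx orbT.
  by rewrite lt_min ltr01 andbT; apply: etapos.
have cA01 : forall A, 0 <= A -> 0 < cA c eta A <= 1 by move=> A A0; apply: hc01; exact: eA01.
pose Kout := (Num.trunc (4 / eps ^+ 2)).+1.
exists (outer c eta Kout).
move=> n N Phi hN h1 hneg hb hspan hii hiii f hf.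
pose ee := e Phi f.
have ee01 : forall L, 0 <= L -> 0 <= ee L <= 1.
  by move=> L L0; rewrite /ee e_ge0 // (e_le1 Phi hf).
have eps2 : 0 < eps ^+ 2 / 4 by rewrite divr_gt0 ?exprn_gt0.
have [k [hk gapk]] : exists k, (k < Kout)%N /\ ee (outer c eta k) - ee (outer c eta k.+1) <= eps ^+ 2 / 4.
  apply: (pigeon (x := fun k => ee (outer c eta k))) => //.
    have := truncnS_gt (4 / eps ^+ 2); rewrite -/Kout => h.
    rewrite ltr_pdivrMr ?exprn_gt0 // in h.
    have -> : Kout%:R * (eps ^+ 2 / 4) = (Kout%:R * eps ^+ 2) / 4 by field.
    by rewrite ltr_pdivlMr // mul1r; lra.
  by move=> i _; apply: ee01; apply: outer_ge0.
set A := outer c eta k.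
have A0 : 0 <= A by apply: outer_ge0.
have [c0 c1] : 0 < cA c eta A /\ cA c eta A <= 1 by apply/andP; apply: cA01.
have cc : 0 < cA c eta A ^+ 2 / 4 by rewrite divr_gt0 ?exprn_gt0.
have [i [hi gapi]] : exists i, (i < IA c eta A)%N /\
    ee (chain c eta A i) - ee (chain c eta A i.+1) <= cA c eta A ^+ 2 / 4.
  apply: (pigeon (x := fun i => ee (chain c eta A i))) => //.
    have := truncnS_gt (4 / cA c eta A ^+ 2); rewrite -/(IA c eta A) => h.
    rewrite ltr_pdivrMr ?exprn_gt0 // in h.
    have -> : (IA c eta A)%:R * (cA c eta A ^+ 2 / 4) = ((IA c eta A)%:R * cA c eta A ^+ 2) / 4 by field.
    by rewrite ltr_pdivlMr // mul1r; lra.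
  by move=> j _; apply: ee01; apply: chain_ge0.
set B := chain c eta A i.
have B0 : 0 <= B by apply: chain_ge0.
have AB : A <= B by have := @chain_mono _ c eta A 0 i A0 (leq0n _).
have BA' : B <= outer c eta k.+1.
  by have := @chain_mono _ c eta A i (IA c eta A) A0 (ltnW hi).
pose d := Num.min (cA c eta A ^+ 2 / 8) (eps ^+ 2 / 12).
have d0 : 0 < d by rewrite /d lt_min !divr_gt0 ?exprn_gt0.
have d1 : d <= cA c eta A ^+ 2 / 8 by rewrite /d ge_min lexx.
have d2 : d <= eps ^+ 2 / 12 by rewrite /d ge_min lexx orbT.
have [g [Kg hg]] := e_adh Phi f A0 d0.
have [g' [Kg' hg']] := e_adh Phi f B0 d0.
have hN2 : N (fun x => f x - g' x) < eA eta A.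
  apply: (stable hb hf hiii (eA01 A A0) (cA01 A A0) (mA_ge c eta A) B0 Kg' hg').
    rewrite /cA in d1 *; lra.
  exact: gapi.
have hob := obtuse AB Kg Kg' hg'.
have eB : e Phi f (outer c eta k.+1) <= e Phi f B := e_mono Phi f B0 BA'.
have elbg' := e_lb f Kg'.
have f3b : avg (fun x => (g' x - g x) ^+ 2) <= eps ^+ 2.
  rewrite /ee in gapk; lra.
case: Kg => sg g01.
have [kk [lam [psi [hpsi hrep hsum]]]] := sP_to sg.
exists g, (fun x => f x - g' x), (fun x => g' x - g x), kk, lam, psi.
split; first by move=> x; ring.
split; first exact: g01.
split.
  move=> x; have -> : g x + (g' x - g x) = g' x by ring.
  by case: Kg' => _; apply.
split; first exact: hpsi.
split; first exact: hrep.
have M0 : 0 <= \sum_(i < kk) `|lam i| by apply: sumr_ge0.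
split; first by apply: le_trans hsum _; apply: outer_mono; apply: ltnW.
split.
  apply: le_trans (ltW hN2) _; apply: le_trans (etamono _ _ M0 hsum).
  by rewrite /eA ge_min lexx.
rewrite /norm2.
have hip : ip (fun x => g' x - g x) (fun x => g' x - g x) <= eps ^+ 2.
  by rewrite ipE (avg_ext (b := fun x => (g' x - g x) ^+ 2)) // => x; rewrite expr2.
apply: le_trans (ler_wsqrtr hip) _.
by rewrite sqrtr_sqr ger0_norm // ltW.
Qed.
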